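(* Let $\{J_m(z)\}_{m\geq 0}$ be the sequence generated by $\sum_{m=0}^{\infty}J_m(z)t^m=\frac{1}{1+t+zt^3}$. For $\theta\in(2\pi/3,\pi)$ define \[ r=r(\theta)=\frac{1-4\cos^2\theta}{2\cos\theta},\quad q=q(\theta)=-2\cos\theta,\quad z=z(\theta)=-\frac{1}{r(\theta)^3q(\theta)}, \] \[ t_1=r(\theta)e^{i\theta},\quad t_2=r(\theta)e^{-i\theta},\quad t_3=r(\theta)q(\theta). \] Then for each $\theta\in(2\pi/3,\pi)$ and each $m\geq 0$, \[ J_m(z(\theta))=\frac{q^{m+1}\big[(-2\cos\theta)\sin((m+1)\theta)-\sin((m+2)\theta)\big]+\sin\theta}{z(t_1-t_2)(t_2-t_3)(t_3-t_1)\,t_1^{m+1}t_2^{m+1}t_3^{m+1}}\cdot 2i\, r^{2m+3}. \]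
   Context: A sequence $\{J_m(z)\}$ is generated by $f(t,z)$ if, for each $z\in\mathbb{C}$, $f(t,z)$ is analytic in $t$ in a neighborhood of $t=0$ and $J_m(z)$ is the coefficient of $t^m$ in the power series expansion of $f(t,z)$ in $t$ about $0$. *)

(* Defs.v *)
From Stdlib Require Import Reals.
From Coquelicot Require Export Coquelicot.
Open Scope R_scope.

Definition generated_by (f : C -> C -> C) (J : nat -> C -> C) : Prop :=
  forall z : C, exists eps : R, 0 < eps /\
    forall t : C, Cmod t < eps ->
      is_series (fun m : nat => (J m z * Cpow t m)%C) (f t z).

Definition rth (th : R) : R := (1 - 4 * cos th ^ 2) / (2 * cos th).
Definition qth (th : R) : R := - 2 * cos th.
Definition zth (th : R) : C := RtoC (- / (rth th ^ 3 * qth th)).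
Definition t1 (th : R) : C := (RtoC (rth th) * (cos th, sin th))%C.
Definition t2 (th : R) : C := (RtoC (rth th) * (cos th, (- sin th)%R))%C.
Definition t3 (th : R) : C := RtoC (rth th * qth th).

(* Main.v *)
Require Import Defs.
From Stdlib Require Import Reals Lra Lia Nsatz.
From Coquelicot Require Import Coquelicot.
Open Scope R_scope.

Lemma sum_n_Re (a : nat -> C) n : Re (sum_n a n) = sum_n (fun k => Re (a k)) n.
Proof.
  induction n.
  - rewrite !sum_O. reflexivity.
  - rewrite !sum_Sn, <- IHn. reflexivity.
Qed.
Lemma sum_n_Im (a : nat -> C) n : Im (sum_n a n) = sum_n (fun k => Im (a k)) n.
Proof.
  induction n.
  - rewrite !sum_O. reflexivity.
  - rewrite !sum_Sn, <- IHn. reflexivity.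
Qed.

Lemma is_series_Re (a : nat -> C) l : is_series a l -> is_series (fun n => Re (a n)) (Re l).
Proof.
  unfold is_series. intros H.
  apply filterlim_ext with (fun n => Re (sum_n a n)).
  { intros n. apply sum_n_Re. }
  eapply filterlim_comp. exact H.
  intros P [eps HP]. exists eps. intros y [Hy1 Hy2]. apply HP. exact Hy1.
Qed.
Lemma is_series_Im (a : nat -> C) l : is_series a l -> is_series (fun n => Im (a n)) (Im l).
Proof.
  unfold is_series. intros H.
  apply filterlim_ext with (fun n => Im (sum_n a n)).
  { intros n. apply sum_n_Im. }
  eapply filterlim_comp. exact H.
  intros P [eps HP]. exists eps. intros y [Hy1 Hy2]. apply HP. exact Hy2.
Qed.

Lemma cv_pos (a : nat -> R) eps : 0 < eps -> (forall t, Rabs t < eps -> ex_pseries a t) -> Rbar_lt 0 (CV_radius a).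
Proof.
  intros He H.
  assert (Hx : Rabs (eps/2) < eps) by (rewrite Rabs_pos_eq; lra).
  destruct (Rbar_lt_le_dec (CV_radius a) (Rabs (eps/2))) as [Hl|Hl].
  - exfalso. apply (CV_disk_outside a (eps/2) Hl).
    apply ex_series_lim_0. apply H in Hx. destruct Hx as [l Hl'].
    exists l. apply is_pseries_R. exact Hl'.
  - eapply Rbar_lt_le_trans. 2: exact Hl. simpl. rewrite Rabs_pos_eq; lra.
Qed.

Lemma coef_const (c : nat -> R) k d : 0 < d -> Rbar_lt 0 (CV_radius c) ->
  (forall t, Rabs t < d -> PSeries c t = k) -> forall n, c n = match n with O => k | S _ => 0 end.
Proof.
  intros Hd Hcv H n.
  pose proof (Derive_n_coef c n Hcv) as E.
  rewrite (Derive_n_ext_loc _ (fun _ => k)) in E.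
  2:{ exists (mkposreal d Hd). intros y Hy. apply H.
      change (Rabs (y - 0) < d) in Hy. rewrite Rminus_0_r in Hy. exact Hy. }
  pose proof (INR_fact_neq_0 n).
  destruct n.
  - simpl in E. simpl in *. lra.
  - rewrite Derive_n_const in E. 
    symmetry in E. apply Rmult_integral in E. destruct E; [assumption|contradiction].
Qed.

Definition cser (w : R) (x : nat -> R) : nat -> R :=
  PS_plus x (PS_plus (PS_incr_1 x) (PS_scal w (PS_incr_n x 3))).

Lemma cser_coef (w : R) (x : nat -> R) (g : R -> R) k eps : 0 < eps ->
  (forall t, Rabs t < eps -> is_pseries x t (g t)) ->
  (forall t, Rabs t < eps -> (1 + t + w * t ^ 3) * g t = k) ->
  forall n, cser w x n = match n with O => k | S _ => 0 end.
Proof.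
  intros He Hx Hg.
  assert (Hc : forall t, Rabs t < eps -> is_pseries (cser w x) t k).
  { intros t Ht. rewrite <- (Hg t Ht).
    replace ((1 + t + w * t ^ 3) * g t) with (plus (g t) (plus (scal t (g t)) (scal w (scal (pow_n t 3) (g t))))).
    2:{ unfold plus, scal; simpl. unfold mult, one; simpl. ring. }
    apply (is_pseries_plus (K:=R_AbsRing) (V:=R_NormedModule)). apply Hx; auto.
    apply (is_pseries_plus (K:=R_AbsRing) (V:=R_NormedModule)). apply (is_pseries_incr_1 (K:=R_AbsRing) (V:=R_NormedModule)). apply Hx; auto.
    apply (is_pseries_scal (K:=R_AbsRing) (V:=R_NormedModule)). apply Rmult_comm.
    apply (is_pseries_incr_n (K:=R_AbsRing) (V:=R_NormedModule)). apply Hx; auto. }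
  apply coef_const with eps; auto.
  - apply cv_pos with eps; auto. intros t Ht. exists k. apply Hc; auto.
  - intros t Ht. apply is_pseries_unique. apply Hc; auto.
Qed.

Lemma nz_small (w t : R) : Rabs t < / (2 * (1 + Rabs w)) -> 1 + t + w * t ^ 3 <> 0.
Proof.
  intros Ht.
  assert (Hw : 0 <= Rabs w) by apply Rabs_pos.
  assert (Ht0 : 0 <= Rabs t) by apply Rabs_pos.
  assert (Hd : / (2 * (1 + Rabs w)) <= / 2).
  { apply Rinv_le_contravar; lra. }
  assert (H1 : Rabs t * (2 * (1 + Rabs w)) < 1).
  { apply Rmult_lt_compat_r with (r := 2 * (1 + Rabs w)) in Ht; [|lra].
    rewrite Rinv_l in Ht; lra. }
  assert (H2 : Rabs (w * t ^ 3) <= Rabs w * Rabs t).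
  { rewrite Rabs_mult, <- RPow_abs. 
    apply Rmult_le_compat_l; auto. simpl.
    assert (Rabs t * Rabs t <= 1) by nra. nra. }
  intros E.
  assert (E2 : t + w * t ^ 3 = -1) by lra.
  assert (E3 : Rabs (t + w * t ^ 3) <= Rabs t + Rabs w * Rabs t).
  { eapply Rle_trans. apply Rabs_triang. lra. }
  rewrite E2 in E3. replace (Rabs (-1)) with 1 in E3 by (rewrite Rabs_left; lra). nra.
Qed.

Lemma gen_rec (J : nat -> C -> C) (w : R) :
  generated_by (fun t z => (/ (1 + t + z * Cpow t 3))%C) J ->
  (forall n, cser w (fun n => Re (J n (RtoC w))) n = match n with O => 1 | S _ => 0 end) /\
  (forall n, cser w (fun n => Im (J n (RtoC w))) n = match n with O => 0 | S _ => 0 end).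
Proof.
  intros H. destruct (H (RtoC w)) as [eps [He Hs]].
  set (d0 := / (2 * (1 + Rabs w))).
  assert (Hd0 : 0 < d0).
  { unfold d0. apply Rinv_0_lt_compat. pose proof (Rabs_pos w). lra. }
  set (e := Rmin eps d0).
  assert (He0 : 0 < e) by (apply Rmin_pos; auto).
  assert (Hser : forall t, Rabs t < e ->
     is_series (fun m => (J m (RtoC w) * Cpow (RtoC t) m)%C) (RtoC (/ (1 + t + w * t ^ 3)))).
  { intros t Ht.
    assert (Hnz : 1 + t + w * t ^ 3 <> 0).
    { apply nz_small. eapply Rlt_le_trans. exact Ht. apply Rmin_r. }
    rewrite RtoC_inv; auto. rewrite RtoC_plus, RtoC_plus, RtoC_mult, RtoC_pow.
    apply Hs. rewrite Cmod_R. eapply Rlt_le_trans. exact Ht. apply Rmin_l. }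
  assert (Hnz : forall t, Rabs t < e -> 1 + t + w * t ^ 3 <> 0).
  { intros t Ht. apply nz_small. eapply Rlt_le_trans. exact Ht. apply Rmin_r. }
  split.
  - apply cser_coef with (g := fun t => / (1 + t + w * t ^ 3)) (eps := e); auto.
    + intros t Ht. apply is_pseries_R.
      apply is_series_ext with (fun m => Re (J m (RtoC w) * Cpow (RtoC t) m)%C).
      { intros m. rewrite <- RtoC_pow. unfold Re, Im. simpl. ring. }
      apply (is_series_Re _ _ (Hser t Ht)).
    + intros t Ht. field. auto.
  - apply cser_coef with (g := fun t => 0) (eps := e); auto.
    + intros t Ht. apply is_pseries_R.
      apply is_series_ext with (fun m => Im (J m (RtoC w) * Cpow (RtoC t) m)%C).
      { intros m. rewrite <- RtoC_pow. unfold Re, Im. simpl. ring. }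
      apply (is_series_Im _ _ (Hser t Ht)).
    + intros t Ht. ring.
Qed.

Lemma cser_eq w x n : cser w x n = x n + (match n with O => 0 | S k => x k end)
   + w * (match n with O | S O | S (S O) => 0 | S (S (S k)) => x k end).
Proof.
  destruct n as [|[|[|n]]]; unfold cser, PS_plus, PS_scal, PS_incr_n, PS_incr_1, plus, scal;
  simpl; unfold mult, zero; simpl; ring.
Qed.

Lemma rec_unique (x y : nat -> R) w : (forall n, cser w x n = cser w y n) -> forall n, x n = y n.
Proof.
  intros H.
  assert (K : forall n, x n = y n /\ x (S n) = y (S n) /\ x (S (S n)) = y (S (S n))).
  { induction n as [|n [I1 [I2 I3]]].
    - pose proof (H 0%nat) as H0. pose proof (H 1%nat) as H1. pose proof (H 2%nat) as H2.
      rewrite !cser_eq in H0, H1, H2. repeat split; lra.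
    - pose proof (H (S (S (S n)))) as H3. rewrite !cser_eq in H3.
      repeat split; try assumption. rewrite I1, I3 in H3. lra. }
  intros n; apply K.
Qed.

Section Trig.
Variable th : R.
Hypothesis Hth : 2 * PI / 3 < th < PI.

Definition sk (k : nat) := sin (INR k * th).
Lemma sk_rec k : sk (S (S k)) = 2 * cos th * sk (S k) - sk k.
Proof.
  unfold sk. rewrite !S_INR.
  replace ((INR k + 1 + 1) * th) with ((INR k + 1) * th + th) by ring.
  replace (sin (INR k * th)) with (sin ((INR k + 1) * th - th)) by (f_equal; ring).
  rewrite sin_plus, sin_minus. ring.
Qed.

Lemma cos_bounds : -1 < cos th < -1/2.
Proof.
  pose proof PI_RGT_0.
  split.
  - rewrite <- cos_PI. apply cos_decreasing_1; lra.
  - replace (-1/2) with (cos (2 * PI / 3)).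
    + apply cos_decreasing_1; lra.
    + replace (2 * PI / 3) with (PI - PI/3) by field. rewrite cos_minus, cos_PI, sin_PI, cos_PI3. lra.
Qed.

Lemma sin_pos : 0 < sin th.
Proof. apply sin_gt_0; pose proof PI_RGT_0; lra. Qed.

Definition Nf (m : nat) : R :=
  qth th ^ (m + 1) * ((- 2 * cos th) * sk (m + 1) - sk (m + 2)) + sin th.
Definition Gf (m : nat) : R :=
  Nf m / (sin th * (1 + 8 * cos th ^ 2) * rth th ^ m * qth th ^ m).
Definition wz : R := - / (rth th ^ 3 * qth th).

Lemma Gf_cser n : cser wz Gf n = match n with O => 1 | S _ => 0 end.
Proof.
  pose proof cos_bounds as Hc. pose proof sin_pos as Hs.
  assert (Hr : rth th <> 0).
  { unfold rth. intro E. apply Rmult_integral in E. destruct E as [E|E].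
    - nra.
    - apply Rinv_neq_0_compat in E; auto. lra. }
  assert (Hq : qth th <> 0) by (unfold qth; lra).
  assert (Hrn : forall k, rth th ^ k <> 0) by (intros; apply pow_nonzero; auto).
  assert (Hqn : forall k, qth th ^ k <> 0) by (intros; apply pow_nonzero; auto).
  rewrite cser_eq. unfold Gf, Nf, wz.
  assert (sk0 : sk 0 = 0) by (unfold sk; simpl; rewrite Rmult_0_l; apply sin_0).
  assert (sk1 : sk 1 = sin th) by (unfold sk; simpl; rewrite Rmult_1_l; reflexivity).
  destruct n as [|[|[|n]]]; rewrite ?Nat.add_1_r, ?(fun x => Nat.add_comm x 2); simpl; rewrite ?sk_rec, ?sk0, ?sk1; unfold rth, qth; simpl.
  all: unfold rth, qth in Hrn, Hqn; 
    assert (c0 : cos th <> 0) by lra; assert (c1 : 1 - 4 * (cos th * (cos th * 1)) <> 0) by nra;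
    assert (c2 : 1 + 8 * (cos th * (cos th * 1)) <> 0) by nra; assert (s0 : sin th <> 0) by lra.
  all: field; repeat split; auto.
  all: try apply Hrn; try apply Hqn; nra.
Qed.
End Trig.

Lemma C_fin (N d p12 p3 rho : R) : d <> 0 -> p12 <> 0 -> p3 <> 0 ->
  (RtoC N / (RtoC d * Ci * RtoC p12 * RtoC p3) * (RtoC 2 * Ci) * RtoC rho)%C
  = RtoC (N * 2 * rho / (d * p12 * p3)).
Proof.
  intros Hd H12 H3.
  assert (nz : forall x, x <> 0 -> RtoC x <> 0%C).
  { intros x Hx E. apply Hx. injection E. auto. }
  assert (Ci0 : Ci <> 0%C).
  { intro E. injection E. lra. }
  assert (HH : d * p12 * p3 <> 0).
  { repeat (apply Rmult_integral_contrapositive; split); auto. }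
  unfold Rdiv. rewrite !RtoC_mult, (RtoC_inv _ HH), !RtoC_mult.
  field. repeat split; auto.
Qed.

Section Fin.
Variable th : R.
Hypothesis Hth : 2 * PI / 3 < th < PI.

Lemma rhs_eq m :
    ((RtoC (qth th ^ (m + 1) * ((- 2 * cos th) * sin (INR (m + 1) * th)
                                 - sin (INR (m + 2) * th)) + sin th)
      / (zth th * (t1 th - t2 th) * (t2 th - t3 th) * (t3 th - t1 th)
         * Cpow (t1 th) (m + 1) * Cpow (t2 th) (m + 1) * Cpow (t3 th) (m + 1)))
     * (RtoC 2 * Ci) * RtoC (rth th ^ (2 * m + 3)))%C = RtoC (Gf th m).
Proof.
  pose proof (cos_bounds th Hth) as Hc. pose proof (sin_pos th Hth) as Hs.
  assert (Hr : rth th <> 0).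
  { unfold rth. intro E. apply Rmult_integral in E. destruct E as [E|E].
    - nra.
    - apply Rinv_neq_0_compat in E; auto. lra. }
  assert (Hq : qth th <> 0) by (unfold qth; lra).
  assert (Hrn : forall k, rth th ^ k <> 0) by (intros; apply pow_nonzero; auto).
  assert (Hqn : forall k, qth th ^ k <> 0) by (intros; apply pow_nonzero; auto).
  pose proof (sin2_cos2 th) as SC. unfold Rsqr in SC.
  set (r := rth th) in *. set (q := qth th) in *.
  assert (HD : (zth th * (t1 th - t2 th) * (t2 th - t3 th) * (t3 th - t1 th))%C
     = (RtoC (wz th * (2 * r * sin th) * (- (r ^ 2 * (1 + 8 * cos th ^ 2)))) * Ci)%C).
  { unfold zth, t1, t2, t3, wz. fold r q. apply injective_projections; simpl.
    - unfold q, qth. nra.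
    - set (iv := / (r * (r * (r * 1)) * q)). assert (Eq : q = -2 * cos th) by reflexivity. rewrite Eq. nsatz. }
  assert (H12 : (Cpow (t1 th) (m + 1) * Cpow (t2 th) (m + 1))%C = RtoC ((r ^ 2) ^ (m + 1))).
  { rewrite <- Cpow_mult_l, RtoC_pow. f_equal. unfold t1, t2. fold r.
    apply injective_projections; simpl; nra. }
  assert (H3 : Cpow (t3 th) (m + 1) = RtoC ((r * q) ^ (m + 1))).
  { rewrite RtoC_pow. reflexivity. }
  rewrite HD, <- (Cmult_assoc _ (Cpow (t1 th) (m + 1))), H12, H3.
  assert (Hw : wz th <> 0).
  { unfold wz. apply Ropp_neq_0_compat. apply Rinv_neq_0_compat. fold r q.
    apply Rmult_integral_contrapositive; split; auto. }
  rewrite C_fin.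
  2:{ repeat match goal with |- _ * _ <> 0 => apply Rmult_integral_contrapositive; split
       | |- - _ <> 0 => apply Ropp_neq_0_compat end; auto; try lra; nra. }
  2: apply pow_nonzero; apply pow_nonzero; auto.
  2: apply pow_nonzero; apply Rmult_integral_contrapositive; split; auto.
  f_equal. unfold Gf, Nf, wz, sk. fold r q.
  set (N := q ^ (m + 1) * (-2 * cos th * sin (INR (m + 1) * th) - sin (INR (m + 2) * th)) + sin th).
  rewrite <- pow_mult, Rpow_mult_distr.
  replace (2 * m + 3)%nat with (m + m + 3)%nat by lia.
  replace (2 * (m + 1))%nat with (m + m + 2)%nat by lia.
  rewrite !pow_add.
  assert (c0 : 1 + 8 * cos th ^ 2 <> 0) by nra.
  assert (s0 : sin th <> 0) by lra.
  field. repeat split; auto.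
Qed.
End Fin.

Theorem mainTheorem17 (J : nat -> C -> C) :
  generated_by (fun t z => (/ (1 + t + z * Cpow t 3))%C) J ->
  forall (th : R), 2 * PI / 3 < th < PI ->
  forall m : nat,
    J m (zth th) =
    ((RtoC (qth th ^ (m + 1) * ((- 2 * cos th) * sin (INR (m + 1) * th)
                                 - sin (INR (m + 2) * th)) + sin th)
      / (zth th * (t1 th - t2 th) * (t2 th - t3 th) * (t3 th - t1 th)
         * Cpow (t1 th) (m + 1) * Cpow (t2 th) (m + 1) * Cpow (t3 th) (m + 1)))
     * (RtoC 2 * Ci) * RtoC (rth th ^ (2 * m + 3)))%C.
Proof.
  intros HJ th Hth m.
  destruct (gen_rec J (wz th) HJ) as [Ha Hb].
  assert (Ea : forall n, Re (J n (RtoC (wz th))) = Gf th n).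
  { apply rec_unique with (wz th). intros n. rewrite Ha, Gf_cser; auto. }
  assert (Eb : forall n, Im (J n (RtoC (wz th))) = 0).
  { apply (rec_unique _ (fun _ => 0)) with (wz th). intros n. rewrite Hb, cser_eq.
    destruct n as [|[|[|n]]]; ring. }
  rewrite rhs_eq by auto.
  change (zth th) with (RtoC (wz th)).
  apply injective_projections; simpl; [apply Ea | apply Eb].
Qed.
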